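(* Let $n,p,k\ge 1$, let $X\in\mathbb{R}^{n\times p}$, $\omega\in\mathbb{R}^n$, and let $\theta_1^*,\dots,\theta_k^*\in\mathbb{R}^p$, with observation $y = X\sum_{i=1}^k\theta_i^* + \omega$. Let $R_1,\dots,R_k$ be norms on $\mathbb{R}^p$ and let $(\hat\theta_1,\dots,\hat\theta_k)$ be a solution of $$\min_{\theta_1,\dots,\theta_k}\Big\|y - X\sum_{i=1}^k\theta_i\Big\|_2^2\quad\text{s.t.}\quad R_i(\theta_i)\le R_i(\theta_i^* ),\ i=1,\dots,k.$$ Set $\Delta_i=\hat\theta_i-\theta_i^*$. Assume the restricted eigenvalue condition holds with constant $\kappa>0$: for all $\Delta_i'\in\mathcal{C}_i$, $i=1,\dots,k$, $$\frac{1}{\sqrt n}\Big\|X\sum_{i=1}^k\Delta_i'\Big\|_2\ \ge\ \kappa\sum_{i=1}^k\|\Delta_i'\|_2 .$$ Let $\gamma>0$. If $\kappa^2>\gamma$, then $\sum_{i=1}^k\|\Delta_i\|_2\le 2 s_n(\gamma)$.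
   Context: For each $i$, the error cone is $\mathcal{C}_i=\operatorname{cone}\{\Delta\in\mathbb{R}^p: R_i(\theta_i^*+\Delta)\le R_i(\theta_i^* )\}$, where $\operatorname{cone}(E)$ denotes the smallest closed cone containing $E$. Let $\mathcal{H}=\{\sum_{i=1}^k\Delta_i' : \Delta_i'\in\mathcal{C}_i,\ \sum_{i=1}^k\|\Delta_i'\|_2=1\}$ and, for $s>0$, $s\mathcal{H}=\{su:u\in\mathcal{H}\}$. The noise–design interaction is $$s_n(\gamma)=\inf\Big\{s>0:\ \sup_{u\in s\mathcal{H}}\frac{1}{\sqrt n}\,\omega^T X u\le \gamma s^2\sqrt n\Big\}.$$ *)

(* Defs.v *)
From HB Require Import structures.
From mathcomp Require Import all_boot all_order all_algebra.
From mathcomp Require Import all_classical all_reals all_analysis.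
Set Implicit Arguments. Unset Strict Implicit. Unset Printing Implicit Defensive.
Import Order.TTheory GRing.Theory Num.Theory.
Import numFieldNormedType.Exports.
Local Open Scope classical_set_scope.
Local Open Scope ring_scope.

Section Defs.
Variable R : realType.

Definition l2norm (m : nat) (v : 'cV[R]_m) : R :=
  Num.sqrt (\sum_(j < m) (v j 0) ^+ 2).

Definition is_norm (p : nat) (N : 'cV[R]_p -> R) : Prop :=
  [/\ (forall x, N x = 0 -> x = 0),
      (forall (a : R) x, N (a *: x) = `|a| * N x) &
      (forall x y, N (x + y) <= N x + N y)].

Definition is_cone (p : nat) (C : set 'cV[R]_p) : Prop :=
  forall (t : R) x, 0 <= t -> C x -> C (t *: x).

Definition cone_hull (p : nat) (E : set 'cV[R]_p) : set 'cV[R]_p :=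
  \bigcap_(C in [set C : set 'cV[R]_p | [/\ closed C, is_cone C & E `<=` C]]) C.

Definition error_cone (p : nat) (Ri : 'cV[R]_p -> R) (thi : 'cV[R]_p)
  : set 'cV[R]_p :=
  cone_hull [set D | Ri (thi + D) <= Ri thi].

Definition Hset (p k : nat) (C : 'I_k -> set 'cV[R]_p) : set 'cV[R]_p :=
  [set u | exists D : 'I_k -> 'cV[R]_p,
     [/\ forall i, C i (D i), \sum_(i < k) l2norm (D i) = 1 &
         u = \sum_(i < k) D i]].

Definition scaled_set (p : nat) (s : R) (H : set 'cV[R]_p) : set 'cV[R]_p :=
  [set s *: u | u in H].

(* noise-design interaction s_n(gamma), as an extended real (inf of empty = +oo) *)
Definition s_n (n p k : nat) (X : 'M[R]_(n, p)) (w : 'cV[R]_n)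
  (C : 'I_k -> set 'cV[R]_p) (gamma : R) : \bar R :=
  ereal_inf [set s%:E | s in
    [set s : R | 0 < s /\
       (forall u, scaled_set s (Hset C) u ->
          (Num.sqrt n%:R)^-1 * (w^T *m X *m u) 0 0
            <= gamma * s ^+ 2 * Num.sqrt n%:R)]].

End Defs.

(* Main.v *)
Require Import Defs.
From HB Require Import structures.
From mathcomp Require Import all_boot all_order all_algebra.
From mathcomp Require Import all_classical all_reals all_analysis.
From mathcomp Require Import ring lra.
Import Order.TTheory GRing.Theory Num.Theory.
Import numFieldNormedType.Exports.
Local Open Scope classical_set_scope.
Local Open Scope ring_scope.

Lemma hull_sub (R : realType) (p : nat) (E : set 'cV[R]_p) x :
  E x -> cone_hull E x.
Proof. by move=> Ex C [_ _ sub]; exact: sub. Qed.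

Lemma hull_scale (R : realType) (p : nat) (E : set 'cV[R]_p) x c :
  0 <= c -> cone_hull E x -> cone_hull E (c *: x).
Proof. by move=> c0 H C [cl cc sub]; exact: (cc c x c0 (H C (And3 cl cc sub))). Qed.

Lemma l2norm_ge0 (R : realType) m (v : 'cV[R]_m) : 0 <= l2norm v.
Proof. exact: sqrtr_ge0. Qed.

Lemma l2norm_sq (R : realType) m (v : 'cV[R]_m) :
  l2norm v ^+ 2 = \sum_(j < m) (v j 0) ^+ 2.
Proof. by rewrite /l2norm sqr_sqrtr // sumr_ge0 // => j _; exact: sqr_ge0. Qed.

Lemma l2normZ (R : realType) m (a : R) (v : 'cV[R]_m) :
  l2norm (a *: v) = `|a| * l2norm v.
Proof.
rewrite /l2norm.
under eq_bigr => j _ do rewrite mxE exprMn.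
by rewrite -mulr_sumr sqrtrM ?sqr_ge0 // sqrtr_sqr.
Qed.

Lemma l2norm_subsq (R : realType) m (w v : 'cV[R]_m) :
  l2norm (w - v) ^+ 2 =
  l2norm w ^+ 2 - 2 * (\sum_(j < m) w j 0 * v j 0) + l2norm v ^+ 2.
Proof.
rewrite !l2norm_sq.
under eq_bigr => j _ do rewrite !mxE sqrrB.
rewrite big_split big_split /=; congr (_ + _ + _).
by rewrite sumrN sumrMnl mulr_natl.
Qed.

Lemma bil (R : realType) n p (w : 'cV[R]_n) (X : 'M[R]_(n, p)) (c : R) (D : 'cV[R]_p) :
  (w^T *m X *m (c *: D)) 0 0 = c * \sum_(j < n) w j 0 * (X *m D) j 0.
Proof.
rewrite -scalemxAr mxE -mulmxA mxE; congr (_ * _).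
by apply: eq_bigr => j _; rewrite mxE.
Qed.

Theorem theorem1 (R : realType) (n p k : nat)
  (hn : (0 < n)%N) (hp : (0 < p)%N) (hk : (0 < k)%N)
  (X : 'M[R]_(n, p)) (w : 'cV[R]_n) (thstar : 'I_k -> 'cV[R]_p)
  (y : 'cV[R]_n)
  (hy : y = X *m (\sum_(i < k) thstar i) + w)
  (Rn : 'I_k -> 'cV[R]_p -> R) (hRn : forall i, is_norm (Rn i))
  (thhat : 'I_k -> 'cV[R]_p)
  (hfeas : forall i, Rn i (thhat i) <= Rn i (thstar i))
  (hopt : forall th : 'I_k -> 'cV[R]_p,
     (forall i, Rn i (th i) <= Rn i (thstar i)) ->
     l2norm (y - X *m (\sum_(i < k) thhat i)) ^+ 2
       <= l2norm (y - X *m (\sum_(i < k) th i)) ^+ 2)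
  (kappa : R) (hkappa : 0 < kappa)
  (hRE : forall D : 'I_k -> 'cV[R]_p,
     (forall i, error_cone (Rn i) (thstar i) (D i)) ->
     (Num.sqrt n%:R)^-1 * l2norm (X *m (\sum_(i < k) D i))
       >= kappa * \sum_(i < k) l2norm (D i))
  (gamma : R) (hgamma : 0 < gamma) (hkg : kappa ^+ 2 > gamma) :
  ((\sum_(i < k) l2norm (thhat i - thstar i))%:E
     <= 2%:E * s_n X w (fun i => error_cone (Rn i) (thstar i)) gamma)%E.
Proof.
set d := fun i => thhat i - thstar i.
have dC : forall i, error_cone (Rn i) (thstar i) (d i).
  move=> i; apply: hull_sub; rewrite /d /=.
  by rewrite addrC subrK.
set t := \sum_(i < k) l2norm (d i).
have ht0 : 0 <= t by apply: sumr_ge0 => i _; exact: l2norm_ge0.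
have HRE := hRE d dC; rewrite -/t in HRE.
set Dl := \sum_(i < k) d i.
have hD : y - X *m \sum_(i < k) thhat i = w - X *m Dl.
  by rewrite hy /Dl /d sumrB mulmxBr opprB addrAC addrC.
have hw : y - X *m \sum_(i < k) thstar i = w by rewrite hy addrAC subrr add0r.
have H1 := hopt thstar (fun i => lexx _).
rewrite hD hw l2norm_subsq in H1.
set v := X *m Dl in H1 HRE.
set S := \sum_(j < n) w j 0 * v j 0 in H1.
have H2 : l2norm v ^+ 2 <= 2 * S by lra.
set sN := Num.sqrt n%:R in HRE *.
have sN0 : 0 < sN by rewrite sqrtr_gt0 ltr0n.
have sN2 : sN ^+ 2 = n%:R by rewrite sqr_sqrtr // ler0n.
have HRE' : kappa * t * sN <= l2norm v.
  by rewrite mulrC -ler_pdivlMl.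
have lv0 := @l2norm_ge0 R _ v.
have kt0 : 0 <= kappa * t * sN by rewrite !mulr_ge0 // ltW.
have H3 : (kappa * t * sN) ^+ 2 <= l2norm v ^+ 2.
  by rewrite ler_pXn2r // nnegrE.
have key : ((t / 2)%:E <= s_n X w (fun i => error_cone (Rn i) (thstar i)) gamma)%E.
  apply: le_ereal_inf_tmp => _ [s [s0 Hs] <-]; rewrite lee_fin.
  have [t0|tpos] := eqVneq t 0.
    by rewrite t0 mul0r ltW.
  have tp : 0 < t by rewrite lt_neqAle eq_sym tpos ht0.
  have Hu : scaled_set s (Hset (fun i => error_cone (Rn i) (thstar i)))
               (s *: (t^-1 *: Dl)).
    exists (t^-1 *: Dl) => //.
    exists (fun i => t^-1 *: d i); split.
    - have ti0 : 0 <= t^-1 by rewrite invr_ge0.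
      by move=> i; exact: (@hull_scale _ _ _ _ _ ti0 (dC i)).
    - under eq_bigr => i _ do rewrite l2normZ.
      by rewrite -mulr_sumr gtr0_norm ?invr_gt0 // mulVf // gt_eqF.
    - by rewrite /Dl scaler_sumr.
  have := Hs _ Hu; rewrite scalerA bil -/v -/S -/sN.
  rewrite ler_pdivrMl // mulrAC ler_pdivrMr // => H4.
  have E1 : sN * (gamma * s ^+ 2 * sN) * t = gamma * s ^+ 2 * t * n%:R.
    by rewrite -sN2; ring.
  rewrite E1 in H4.
  have N0 : 0 < n%:R :> R by rewrite ltr0n.
  have E2 : (kappa * t * sN) ^+ 2 = kappa ^+ 2 * t ^+ 2 * n%:R.
    by rewrite -sN2; ring.
  rewrite E2 in H3.
  have stN : 0 < s * t * n%:R by rewrite !mulr_gt0.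
  have HB : kappa ^+ 2 * t * (s * t * n%:R) <= 2 * gamma * s * (s * t * n%:R).
    have HC : s * (kappa ^+ 2 * t ^+ 2 * n%:R) <= s * (2 * S).
      by rewrite ler_pM2l //; apply: le_trans H3 H2.
    have HD : s * (2 * S) <= 2 * (gamma * s ^+ 2 * t * n%:R) by lra.
    have E3 : s * (kappa ^+ 2 * t ^+ 2 * n%:R) = kappa ^+ 2 * t * (s * t * n%:R) by ring.
    have E4 : 2 * (gamma * s ^+ 2 * t * n%:R) = 2 * gamma * s * (s * t * n%:R) by ring.
    by rewrite -E3 -E4; apply: le_trans HC HD.
  rewrite ler_pM2r // in HB.
  nra.
move: key; case: (s_n X w (fun i => error_cone (Rn i) (thstar i)) gamma) => [z| |] key.
- by rewrite !lee_fin in key *; lra.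
- by rewrite gt0_muley ?lte_fin // leey.
- by rewrite leeNy_eq in key.
Qed.
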